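(* Let $b$ be a positive integer, $n$ a positive integer coprime with $b$, and $k\in\mathbb N$. Then the Frobenius homomorphism $F_b:\mathbb Z[1/b][q]/(\Phi_n(q)^k)\to\mathbb Z[1/b][q]/(\Phi_n(q)^k)$ defined by $F_b(q)=q^b$ is a (well-defined) isomorphism of algebras.
   Context: $\Phi_n(q)$ denotes the $n$th cyclotomic polynomial. *)

(* Defs.v *)
From HB Require Import structures.
From mathcomp Require Import all_boot all_order all_algebra all_field.
Set Implicit Arguments. Unset Strict Implicit. Unset Printing Implicit Defensive.
Import Order.TTheory GRing.Theory Num.Theory.
Local Open Scope ring_scope.

(* Z[1/b] realised as the subring of Q of fractions z / b^m. *)
Definition Zinvb (b : nat) (x : rat) : Prop :=
  exists (z : int) (m : nat), x = z%:~R / (b ^ m)%:R.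

(* Z[1/b][q], realised inside Q[q]: polynomials with all coefficients in Z[1/b]. *)
Definition polyZinvb (b : nat) (p : {poly rat}) : Prop :=
  forall i : nat, Zinvb b p`_i.

Definition PhiQ (n : nat) : {poly rat} := map_poly intr 'Phi_n.

Definition in_cyc_ideal (b n k : nat) (p : {poly rat}) : Prop :=
  exists r : {poly rat}, polyZinvb b r /\ p = PhiQ n ^+ k * r.

Definition frob (b : nat) (p : {poly rat}) : {poly rat} := p \Po 'X^b.

(* Main.v *)
Require Import Defs.
From HB Require Import structures.
From mathcomp Require Import all_boot all_order all_algebra all_field all_solvable.
From Stdlib Require Import ClassicalEpsilon.
Set Implicit Arguments. Unset Strict Implicit. Unset Printing Implicit Defensive.
Import Order.TTheory GRing.Theory Num.Theory.
Local Open Scope ring_scope.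

Definition zsub (b : nat) (x : rat) : bool :=
  if excluded_middle_informative (Zinvb b x) then true else false.

Lemma zsubP b x : reflect (Zinvb b x) (zsub b x).
Proof. rewrite /zsub; case: excluded_middle_informative => H; constructor => //. Qed.

Lemma Zinvb_norm b x : Zinvb b x -> exists z m, x = z%:~R / (b ^ m)%:R /\ (b ^ m)%:R != 0 :> rat.
Proof.
case=> z [m ->]; case: b => [|b].
  case: m => [|m]; first by exists z, 0%N; rewrite expn0.
  by exists 0, 0%N; rewrite exp0n // invr0 mulr0 mul0r expn0.
by exists z, m; split => //; rewrite pnatr_eq0 expn_eq0.
Qed.

Lemma zsub_closed b : subring_closed (zsub b).
Proof.
split.
- by apply/zsubP; exists 1, 0%N; rewrite expn0 divr1.
- move=> x y /zsubP/Zinvb_norm [z1 [m1 [-> h1]]] /zsubP/Zinvb_norm [z2 [m2 [-> h2]]].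
  apply/zsubP; exists (z1 * (b ^ m2)%:Z - z2 * (b ^ m1)%:Z), (m1 + m2)%N.
  rewrite expnD natrM rmorphB /= !rmorphM /=.
  have -> : ((b ^ m2)%:Z)%:~R = (b ^ m2)%:R :> rat by [].
  have -> : ((b ^ m1)%:Z)%:~R = (b ^ m1)%:R :> rat by [].
  rewrite mulrBl invfM.
  congr (_ - _).
    by rewrite -mulrA; congr (_ * _); rewrite mulrCA divff // mulr1.
  by rewrite -mulrA; congr (_ * _); rewrite mulrA divff // mul1r.
- move=> x y /zsubP [z1 [m1 ->]] /zsubP [z2 [m2 ->]].
  apply/zsubP; exists (z1 * z2), (m1 + m2)%N.
  by rewrite expnD natrM rmorphM /= invfM mulrACA.
Qed.

HB.instance Definition _ (b : nat) := GRing.isSubringClosed.Build rat (zsub b) (zsub_closed b).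


Lemma polyZinvbE b p : polyZinvb b p <-> p \is a polyOver (zsub b).
Proof.
split => [H | /polyOverP H i]; first by apply/polyOverP => i; apply/zsubP; apply: H.
by apply/zsubP; apply: H.
Qed.

Lemma inv_b b : ((b%:R) ^-1 : rat) \in zsub b.
Proof. by apply/zsubP; exists 1, 1%N; rewrite expn1 div1r. Qed.

Lemma int_zsub b (z : int) : (z%:~R : rat) \in zsub b.
Proof. by apply/zsubP; exists z, 0%N; rewrite expn0 divr1. Qed.

Notation P b := (polyOver (zsub b)).

Lemma lead_over b p : p \in P b -> lead_coef p \in zsub b.
Proof. by move/polyOverP; apply. Qed.

Lemma redivp_rec_over b (q : {poly rat}) : q \in P b -> forall n k qq r,
  qq \in P b -> r \in P b -> ((Pdiv.Ring.redivp_rec q k qq r n).1.2 \in P b).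
Proof.
move=> Pq; elim=> [|n IH] k qq r Pqq Pr /=; case: ifP => _ //=.
- by rewrite rpredD ?rpredM ?polyOverC ?lead_over ?polyOverZ ?lead_over ?polyOverXn.
- apply: IH.
    by rewrite rpredD ?rpredM ?polyOverC ?lead_over ?polyOverZ ?lead_over ?polyOverXn.
  by rewrite rpredB ?rpredM ?polyOverC ?lead_over ?polyOverZ ?lead_over ?polyOverXn.
Qed.

Lemma rdivp_over b p d : p \in P b -> d \in P b -> Pdiv.Ring.rdivp p d \in P b.
Proof.
move=> Pp Pd; rewrite /Pdiv.Ring.rdivp /Pdiv.Ring.redivp; rewrite locked_withE /Pdiv.Ring.redivp_expanded_def.
case: (d == 0); first exact: polyOver0.
exact: redivp_rec_over (polyOver0 _) Pp.
Qed.

Lemma monic_div_over b p d : p \in P b -> d \in P b -> d \is monic -> d %| p ->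
  exists2 t, t \in P b & p = t * d.
Proof.
move=> Pp Pd md; rewrite dvdpE /Pdiv.Ring.rdvdp => /eqP m0.
exists (Pdiv.Ring.rdivp p d); first exact: rdivp_over.
by rewrite {1}(Pdiv.RingMonic.rdivp_eq md p) m0 addr0.
Qed.

Definition dv b (D p : {poly rat}) := exists2 t, t \in P b & p = D * t.

Section DV.
Variable b : nat.
Implicit Types D p q u v t : {poly rat}.

Lemma dv0 D : dv b D 0.
Proof. by exists 0; rewrite ?polyOver0 ?mulr0. Qed.

Lemma dvD D p q : dv b D p -> dv b D q -> dv b D (p + q).
Proof. by move=> [t Pt ->] [s Ps ->]; exists (t + s); rewrite ?rpredD ?mulrDr. Qed.

Lemma dvN D p : dv b D p -> dv b D (- p).
Proof. by move=> [t Pt ->]; exists (- t); rewrite ?rpredN ?mulrN. Qed.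

Lemma dvB D p q : dv b D p -> dv b D q -> dv b D (p - q).
Proof. by move=> h1 h2; apply: dvD => //; apply: dvN. Qed.

Lemma dvMr D p t : dv b D p -> t \in P b -> dv b D (p * t).
Proof. by move=> [s Ps ->] Pt; exists (s * t); rewrite ?rpredM ?mulrA. Qed.

Lemma dvMl D p t : dv b D p -> t \in P b -> dv b D (t * p).
Proof. by move=> h Pt; rewrite mulrC; apply: dvMr. Qed.

Lemma dvZ D p c : dv b D p -> c \in zsub b -> dv b D (c *: p).
Proof. by move=> h Pc; rewrite -mul_polyC; apply: dvMl; rewrite ?polyOverC. Qed.

Lemma dv_trans D1 D2 p : dv b D1 D2 -> dv b D2 p -> dv b D1 p.
Proof. by move=> [s Ps ->] [t Pt ->]; exists (s * t); rewrite ?rpredM ?mulrA. Qed.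

Lemma dvM D1 D2 p q : dv b D1 p -> dv b D2 q -> dv b (D1 * D2) (p * q).
Proof.
move=> [s Ps ->] [t Pt ->]; exists (s * t); rewrite ?rpredM //.
by rewrite mulrACA.
Qed.

Lemma dvX D p k : dv b D p -> dv b (D ^+ k) (p ^+ k).
Proof.
move=> h; elim: k => [|k IH]; first by exists 1; rewrite ?rpred1 ?expr0 ?mulr1.
by rewrite !exprS; apply: dvM.
Qed.

Lemma dv1 p : p \in P b -> dv b 1 p.
Proof. by move=> Pp; exists p; rewrite ?mul1r. Qed.

Lemma dvrefl D : dv b D D.
Proof. by exists 1; rewrite ?rpred1 ?mulr1. Qed.

Lemma dvP D p : dv b D p -> D \in P b -> p \in P b.
Proof. by move=> [t Pt ->] PD; rewrite rpredM. Qed.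

Lemma dv_sum D (I : Type) (r : seq I) (F : I -> {poly rat}) :
  (forall i, dv b D (F i)) -> dv b D (\sum_(i <- r) F i).
Proof.
move=> h; elim: r => [|i r IH]; first by rewrite big_nil; apply: dv0.
by rewrite big_cons; apply: dvD.
Qed.

Lemma dv_comp D p u : dv b D p -> u \in P b -> dv b (D \Po u) (p \Po u).
Proof.
move=> [t Pt ->] Pu; exists (t \Po u); first exact: polyOver_comp.
by rewrite comp_polyM.
Qed.

Lemma dv_XX u v k : u \in P b -> v \in P b -> dv b (u - v) (u ^+ k - v ^+ k).
Proof.
move=> Pu Pv; rewrite subrXX; exists (\sum_(i < k) u ^+ (k.-1 - i) * v ^+ i) => //.
by apply: rpred_sum => i _; rewrite rpredM ?rpredX.
Qed.

Lemma dv_compdiff q u v : q \in P b -> u \in P b -> v \in P b ->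
  dv b (u - v) ((q \Po u) - (q \Po v)).
Proof.
move=> Pq Pu Pv; rewrite [q \Po u]comp_polyE [q \Po v]comp_polyE -sumrB; apply: dv_sum => i.
rewrite -scalerBr; apply: dvZ; first exact: dv_XX.
by move/polyOverP: Pq; apply.
Qed.

Lemma dv_cancel D p j : D != 0 -> p \in P b -> dv b (D ^+ j.+1) (D ^+ j * p) -> dv b D p.
Proof.
move=> nD Pp [t Pt e]; exists t => //.
apply: (@mulfI _ (D ^+ j)); first by rewrite expf_neq0.
by rewrite e exprS mulrA [D ^+ j * D]mulrC.
Qed.

End DV.
Local Open Scope ring_scope.

Lemma intpoly_over b (p : {poly int}) : map_poly intr p \in P b.
Proof. by apply/polyOverP => i; rewrite coef_map /= int_zsub. Qed.

Lemma PhiQ_over b n : PhiQ n \in P b.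
Proof. exact: intpoly_over. Qed.

Lemma PhiQ_monic n : PhiQ n \is monic.
Proof. exact/monic_map/Cyclotomic_monic. Qed.

Lemma PhiQ_dvd n j : (0 < n)%N -> coprime j n -> PhiQ n %| (PhiQ n \Po 'X^j).
Proof.
move=> n0 cj.
have [z pz] := C_prim_root_exists n0.
have [p [ep mp] hp] := minCpolyP z.
have eP : map_poly ratr (PhiQ n) = cyclotomic z n :> {poly algC}.
  rewrite -(Cintr_Cyclotomic pz) /PhiQ -map_poly_comp.
  by apply: eq_map_poly => x /=; rewrite ratr_int.
have -> : PhiQ n = p.
  apply: (map_inj_poly (fmorph_inj (ratr : {rmorphism rat -> algC}))); first exact: rmorph0.
  by transitivity (cyclotomic z n); [exact: eP | rewrite -ep (minCpoly_cyclotomic pz)].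
rewrite -hp map_comp_poly map_polyXn -ep (minCpoly_cyclotomic pz).
rewrite /root horner_comp hornerXn.
have := root_cyclotomic pz (z ^+ j); rewrite /root => ->.
by rewrite prim_root_exp_coprime.
Qed.
Local Open Scope ring_scope.

Lemma comp_pow (p q : {poly rat}) k : (p ^+ k) \Po q = (p \Po q) ^+ k.
Proof.
elim: k => [|k IH]; first by rewrite !expr0 -polyC1 comp_polyC.
by rewrite !exprS comp_polyM IH.
Qed.

Section Main.
Variables b n : nat.
Hypotheses (b0 : (0 < b)%N) (n0 : (0 < n)%N) (cop : coprime n b).

Let A : {poly rat} := 'X^n - 1.
Let Ph := PhiQ n.

Lemma A_over : A \in P b.
Proof. by rewrite rpredB ?polyOverXn ?rpred1. Qed.

Lemma A_neq0 : A != 0.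
Proof. by apply: monic_neq0; rewrite /A -polyC1 monicXnsubC. Qed.

Lemma Xb_over : 'X^b \in P b.
Proof. exact: polyOverXn. Qed.

Lemma dvPhA : dv b Ph A.
Proof.
have eA : A = map_poly intr ('X^n - 1 : {poly int}).
  by rewrite rmorphB /= map_polyXn rmorph1.
rewrite eA -(prod_Cyclotomic n0) (big_rem n) ?divisors_id //= rmorphM /=.
by exists (map_poly intr (\prod_(y <- rem n (divisors n)) 'Phi_y)); rewrite ?intpoly_over.
Qed.

Lemma dvA_mod i : dv b A ('X^i - 'X^(i %% n)%N).
Proof.
rewrite {1}(divn_eq i n) exprD mulnC exprM -[X in _ - X]mul1r -mulrBl.
apply: dvMr; last exact: polyOverXn.
by rewrite -(expr1n _ (i %/ n)); apply: dv_XX; rewrite ?polyOverXn ?rpred1.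
Qed.

Lemma dvA_cong i j : (i %% n = j %% n)%N -> dv b A ('X^i - 'X^j).
Proof.
move=> e; have -> : 'X^i - 'X^j = ('X^i - 'X^(i %% n)%N) - ('X^j - 'X^(j %% n)%N) :> {poly rat}.
  by rewrite e opprB addrA subrK.
by apply: dvB; apply: dvA_mod.
Qed.

Lemma dvA_comp j : dv b A (A \Po 'X^j).
Proof.
rewrite /A comp_polyB comp_polyC comp_Xn_poly -exprM mulnC exprM.
by rewrite polyC1 -{2}(expr1n _ j); apply: dv_XX; rewrite ?polyOverXn ?rpred1.
Qed.

Definition Gp : {poly rat} := \sum_(i < b) ('X^n) ^+ (b.-1 - i) * 1 ^+ i.

Lemma Gp_over : Gp \in P b.
Proof. by apply: rpred_sum => i _; rewrite expr1n mulr1 -exprM polyOverXn. Qed.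

Lemma AcompXb : A \Po 'X^b = A * Gp.
Proof.
rewrite /A comp_polyB comp_polyC comp_Xn_poly -exprM mulnC exprM.
by rewrite polyC1 -[X in _ - X](expr1n _ b) subrXX.
Qed.

Lemma dvGp : dv b A (Gp - b%:R).
Proof.
have -> : (b%:R : {poly rat}) = \sum_(i < b) 1.
  by rewrite sumr_const card_ord.
rewrite /Gp -sumrB; apply: dv_sum => i.
rewrite expr1n mulr1 -[X in _ - X](expr1n _ (b.-1 - i)).
by apply: dv_XX; rewrite ?polyOverXn ?rpred1.
Qed.

Definition c := (b ^ (totient n).-1)%N.

Lemma bc_mod : ((b * c) %% n = 1 %% n)%N.
Proof.
rewrite /c -expnS prednK ?totient_gt0 //.
by apply: Euler_exp_totient; rewrite coprime_sym.
Qed.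

Lemma dv_bc q : q \in P b -> dv b A ((q \Po 'X^(b * c)%N) - q).
Proof.
move=> Pq; apply: (@dv_trans _ _ ('X^(b * c)%N - 'X)).
  by rewrite -{2}(expr1 'X); apply: dvA_cong; rewrite bc_mod.
rewrite -{2}(comp_polyXr q); apply: dv_compdiff; rewrite ?polyOverXn ?polyOverX //.
Qed.


Let B : {poly rat} := b%:R.
Let beta (k : nat) : {poly rat} := (((b%:R : rat)^-1) ^+ k)%:P.

Lemma B_over : B \in P b.
Proof. by rewrite /B -polyC_natr polyOverC rpred_nat. Qed.

Lemma zsubX x k : x \in zsub b -> x ^+ k \in zsub b.
Proof. by move=> h; elim: k => [|k IH]; rewrite ?expr0 ?rpred1 // exprS rpredM. Qed.

Lemma beta_over k : beta k \in P b.
Proof. by rewrite /beta polyOverC zsubX // inv_b. Qed.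

Lemma betaB k : beta k * B ^+ k = 1.
Proof.
rewrite /beta /B -polyC_natr -rmorphXn -polyCM -exprMn mulVf ?expr1n //.
by rewrite pnatr_eq0 -lt0n.
Qed.

Lemma L1 k : forall j w, w \in P b -> (j <= k)%N -> dv b (A ^+ k) (w \Po 'X^b) ->
  dv b (A ^+ j) w.
Proof.
elim=> [|j IH] w Pw jk h; first by rewrite expr0; apply: dv1.
have [v Pv ew] := IH w Pw (ltnW jk) h.
have eF : w \Po 'X^b = A ^+ j * (Gp ^+ j * (v \Po 'X^b)).
  by rewrite ew comp_polyM comp_pow AcompXb exprMn mulrA.
have Fv_over : v \Po 'X^b \in P b by rewrite polyOver_comp ?Xb_over.
have h1 : dv b (A ^+ j.+1) (A ^+ j * (Gp ^+ j * (v \Po 'X^b))).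
  rewrite -eF; apply: dv_trans h; exists (A ^+ (k - j.+1)); first by rewrite rpredX ?A_over.
  by rewrite -exprD subnKC.
have h2 := dv_cancel A_neq0 (rpredM (rpredX j Gp_over) Fv_over) h1.
have h3 : dv b A (B ^+ j * (v \Po 'X^b)).
  have -> : B ^+ j * (v \Po 'X^b) = Gp ^+ j * (v \Po 'X^b) - (Gp ^+ j - B ^+ j) * (v \Po 'X^b).
    by rewrite mulrBl opprB addrC subrK.
  apply: dvB => //; apply: dvMr => //.
  apply: dv_trans (dvGp) _; apply: dv_XX; rewrite ?Gp_over ?B_over //.
have h4 : dv b A (v \Po 'X^b).
  have := dvMl h3 (beta_over j); by rewrite mulrA betaB mul1r.
have h5 : dv b A (v \Po 'X^(b * c)%N).
  rewrite mulnC exprM -comp_Xn_poly comp_polyA.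
  apply: dv_trans (dvA_comp c) _; apply: dv_comp => //; exact: polyOverXn.
have h6 : dv b A v.
  have -> : v = (v \Po 'X^(b * c)%N) - ((v \Po 'X^(b * c)%N) - v) by rewrite opprB addrC subrK.
  by apply: dvB => //; apply: dv_bc.
have [t Pt et] := h6.
by exists t => //; rewrite ew et exprSr mulrA.
Qed.

Lemma L2 k : exists2 r, r \in P b & dv b (A ^+ k) ((r \Po 'X^b) - 'X).
Proof.
elim: k => [|k [r Pr [h Phh eh]]].
  exists 'X; first exact: polyOverX.
  by rewrite expr0; apply: dv1; rewrite comp_polyX rpredB ?polyOverX ?polyOverXn.
pose r' := r - beta k * (A ^+ k * (h \Po 'X^c)).
have Phc : h \Po 'X^c \in P b by rewrite polyOver_comp ?polyOverXn.
exists r'.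
  by rewrite rpredB ?rpredM ?beta_over ?rpredX ?A_over.
have hh : h \Po 'X^(b * c)%N = (h \Po 'X^c) \Po 'X^b.
  by rewrite -comp_polyA comp_Xn_poly -exprM mulnC.
have e : (r' \Po 'X^b) - 'X = A ^+ k * ((h - (h \Po 'X^(b * c)%N))
        + (beta k * (B ^+ k - Gp ^+ k)) * (h \Po 'X^(b * c)%N)).
  rewrite /r' comp_polyB !comp_polyM comp_polyC comp_pow AcompXb -hh.
  rewrite -/(beta k) exprMn addrAC eh mulrBr betaB mulrBl mul1r addrA subrK mulrBr.
  by congr (_ - _); rewrite !mulrA [beta k * A ^+ k]mulrC.
rewrite e exprSr; apply: dvM; first exact: dvrefl.
apply: dvD.
  rewrite -opprB; apply: dvN; apply: dv_bc => //.
apply: dvMr; last by rewrite polyOver_comp ?polyOverXn.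
apply: dvMl; last exact: beta_over.
rewrite -opprB; apply: dvN.
apply: dv_trans (dvGp) _; apply: dv_XX; rewrite ?Gp_over ?B_over //.
Qed.

Lemma L3 k r : r \in P b -> dv b (A ^+ k) ((r \Po 'X^b) - 'X) ->
  dv b (A ^+ k) (r ^+ b - 'X).
Proof.
move=> Pr h; apply: (@L1 k k); rewrite ?leqnn ?rpredB ?rpredX ?polyOverX //.
rewrite comp_polyB comp_pow comp_polyX.
apply: dv_trans h _; apply: dv_XX; rewrite ?polyOver_comp ?polyOverXn //.
exact: polyOverX. Qed.

Lemma L4 r : r \in P b -> dv b A ((r \Po 'X^b) - 'X) -> dv b A (r - 'X^c).
Proof.
move=> Pr h.
have -> : r - 'X^c = - ((r \Po 'X^(b * c)%N) - r) + ((r \Po 'X^(b * c)%N) - 'X^c).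
  by rewrite opprB addrA subrK.
apply: dvD; first by apply: dvN; apply: dv_bc.
have -> : (r \Po 'X^(b * c)%N) - 'X^c = ((r \Po 'X^b) - 'X) \Po 'X^c.
  by rewrite comp_polyB comp_polyX -comp_polyA comp_Xn_poly -exprM mulnC.
apply: dv_trans (dvA_comp c) _; apply: dv_comp => //; exact: polyOverXn.
Qed.

Lemma Ph_comp j : coprime j n -> dv b Ph (Ph \Po 'X^j).
Proof.
move=> cj.
have [t Pt e] := monic_div_over (polyOver_comp (PhiQ_over b n) (polyOverXn _ j))
   (PhiQ_over b n) (PhiQ_monic n) (PhiQ_dvd n0 cj).
by exists t => //; rewrite /Ph e mulrC.
Qed.

Lemma coprime_c : coprime c n.
Proof. by rewrite /c coprimeXl // coprime_sym. Qed.

Lemma L5 r : r \in P b -> dv b A (r - 'X^c) -> dv b Ph (Ph \Po r).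
Proof.
move=> Pr h.
have -> : Ph \Po r = ((Ph \Po r) - (Ph \Po 'X^c)) + (Ph \Po 'X^c) by rewrite subrK.
apply: dvD; last exact: Ph_comp coprime_c.
apply: dv_trans (dv_trans dvPhA h) _; apply: dv_compdiff; rewrite ?PhiQ_over ?polyOverXn //.
Qed.

End Main.

Lemma in_cycE b n k p : in_cyc_ideal b n k p <-> dv b (PhiQ n ^+ k) p.
Proof.
split; first by move=> [r [/polyZinvbE Pr e]]; exists r.
by move=> [r Pr e]; exists r; split => //; apply/polyZinvbE.
Qed.

Theorem proposition12 (b n k : nat) :
  (0 < b)%N -> (0 < n)%N -> coprime n b ->
  [/\ (* F_b maps Z[1/b][q] into itself (it is a ring endomorphism q |-> q^b) *)
      (forall p, polyZinvb b p -> polyZinvb b (frob b p)),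
      (* well-defined on the quotient: preserves the ideal (Phi_n^k) *)
      (forall p, polyZinvb b p -> in_cyc_ideal b n k p ->
                 in_cyc_ideal b n k (frob b p)),
      (* injective on the quotient *)
      (forall p, polyZinvb b p -> in_cyc_ideal b n k (frob b p) ->
                 in_cyc_ideal b n k p)
    & (* surjective on the quotient *)
      (forall p, polyZinvb b p ->
         exists r, polyZinvb b r /\ in_cyc_ideal b n k (frob b r - p))].
Proof.
move=> b0 n0 cop.
have dPA : dv b (PhiQ n ^+ k) (('X^n - 1) ^+ k).
  by apply: dvX; apply: dvPhA.
split.
- move=> p /polyZinvbE Pp; apply/polyZinvbE; rewrite /frob.
  by rewrite polyOver_comp ?polyOverXn.
- move=> p /polyZinvbE Pp /in_cycE h; apply/in_cycE; rewrite /frob.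
  have h1 := dv_comp h (polyOverXn _ b).
  rewrite comp_pow in h1; apply: dv_trans h1.
  apply: dvX; apply: Ph_comp => //; by rewrite coprime_sym.
- move=> p /polyZinvbE Pp /in_cycE h; apply/in_cycE; move: h; rewrite /frob => h.
  have [r Pr hr] := L2 b0 n0 cop k.+1.
  have hrk : dv b (('X^n - 1) ^+ k) ((r \Po 'X^b) - 'X).
    apply: dv_trans hr; exists ('X^n - 1); rewrite ?exprSr //.
    by rewrite rpredB ?polyOverXn ?rpred1.
  have hr1 : dv b ('X^n - 1) ((r \Po 'X^b) - 'X).
    apply: dv_trans hr; exists (('X^n - 1) ^+ k); rewrite ?exprS //.
    by rewrite rpredX // rpredB ?polyOverXn ?rpred1.
  have h3 := L3 b0 n0 cop Pr hrk.
  have h5 := L5 n0 cop Pr (L4 n0 cop Pr hr1).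
  have -> : p = ((p \Po 'X) - (p \Po (r ^+ b))) + ((p \Po 'X^b) \Po r).
    by rewrite comp_polyXr -comp_polyA comp_Xn_poly subrK.
  apply: dvD.
    apply: dv_trans dPA _; apply: dv_trans (dv_compdiff Pp (polyOverX _) (rpredX b Pr)).
    by have := dvN h3; rewrite opprB.
  have h6 := dv_comp h Pr; rewrite comp_pow in h6.
  exact: dv_trans (dvX _ h5) h6.
- move=> p /polyZinvbE Pp.
  have [r Pr hr] := L2 b0 n0 cop k.
  exists (p \Po r); split; first by apply/polyZinvbE; rewrite polyOver_comp.
  apply/in_cycE; rewrite /frob -comp_polyA -{2}(comp_polyXr p).
  apply: dv_trans dPA _; apply: dv_trans hr _.
  by apply: dv_compdiff; rewrite ?polyOverX ?polyOver_comp ?polyOverXn.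
Qed.
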